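(* Let $S\subseteq\{0,1\}^n$, $1\le m\le n$, $f\in[0,1/2]$, $\Delta\in(0,1)$. Suppose $T\ge 24\ln\frac1\Delta$ hash functions $h_1,\dots,h_T$ are drawn independently from $\mathcal{H}^f_{m\times n}$. Let $$U(n,m,f)=\min\left\{z\ \middle|\ \frac{1}{1+2^{2m}v(z)/z^2}\ge\frac34\right\}.$$ Let $\mathcal{A}(S,h_1,\dots,h_T)$ be the random variable equal to $U(n,m,f)$ if $\mathrm{Median}(\mathbb{I}[S(h_1)=0],\dots,\mathbb{I}[S(h_T)=0])=1$, and equal to $2^n$ otherwise. Then $\Pr\left[|S|\le\mathcal{A}(S,h_1,\dots,h_T)\right]\ge1-\Delta$.
   Context: Drawing $h$ from $\mathcal{H}^f_{m\times n}$ means $h(x)=Ax+b\bmod 2$ with $A\in\{0,1\}^{m\times n}$ having i.i.d. entries with $\Pr[A_{ij}=1]=f$ and $b\in\{0,1\}^m$ uniform and independent of $A$; $S(h)=|\{x\in S:h(x)=0\}|$. In the definition of $U$, $z$ ranges over integers $1\le z\le 2^n$ (minimum of the empty set $=+\infty$). For integer $1\le q\le 2^n+1$: $w^*(n,q)=\max\{w\ge0:\sum_{j=1}^w\binom{n}{j}\le q-1\}$, $r(n,q)=q-1-\sum_{w=1}^{w^*(n,q)}\binom{n}{w}$, $$(q-1)\,\epsilon(n,m,q,f)=\sum_{w=1}^{w^*(n,q)}\binom{n}{w}\frac{(1+(1-2f)^w)^m}{2^m}+\frac{r(n,q)}{2^m}(1+(1-2f)^{w^*(n,q)+1})^m,$$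 and $v(q)=\frac{q}{2^m}\left(1+\epsilon(n,m,q,f)(q-1)-\frac{q}{2^m}\right)$. *)

(* Defs.v *)
From HB Require Import structures.
From mathcomp Require Import all_boot all_order all_algebra.
From mathcomp Require Import all_classical all_reals exp.
Set Implicit Arguments. Unset Strict Implicit. Unset Printing Implicit Defensive.
Import Order.TTheory GRing.Theory Num.Theory.
Local Open Scope ring_scope.

Definition bvec (n : nat) := {ffun 'I_n -> bool}.

(* a hash function h(x) = A x + b mod 2, given by the pair (A, b) *)
Definition hashT (m n : nat) := ('M[bool]_(m, n) * {ffun 'I_m -> bool})%type.

Definition hash_app (m n : nat) (h : hashT m n) (x : bvec n) : {ffun 'I_m -> bool} :=
  [ffun i => h.2 i (+) \big[addb/false]_(j < n) (h.1 i j && x j)].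

Definition cell_count (m n : nat) (S : {set bvec n}) (h : hashT m n) : nat :=
  #|[set x in S | hash_app h x == [ffun=> false]]|.

(* probability weight of h under H^f_{m x n}: entries of A i.i.d. Bernoulli(f),
   b uniform and independent *)
Definition hash_weight (R : realType) (m n : nat) (f : R) (h : hashT m n) : R :=
  (\prod_(i < m) \prod_(j < n) (if h.1 i j then f else 1 - f)) / 2%:R ^+ m.

Definition prob_hashes (R : realType) (m n T : nat) (f : R)
    (E : pred {ffun 'I_T -> hashT m n}) : R :=
  \sum_(hs : {ffun 'I_T -> hashT m n} | E hs) \prod_(t < T) hash_weight f (hs t).

Definition wstar (n q : nat) : nat :=
  \max_(w < n.+1 | (\sum_(1 <= j < w.+1) 'C(n, j) <= q.-1)%N) (w : nat).

Definition rr (n q : nat) : nat := (q.-1 - \sum_(1 <= w < (wstar n q).+1) 'C(n, w))%N.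

(* (q-1) * epsilon(n,m,q,f) *)
Definition eps_times (R : realType) (n m q : nat) (f : R) : R :=
  \sum_(1 <= w < (wstar n q).+1)
     'C(n, w)%:R * (1 + (1 - 2 * f) ^+ w) ^+ m / 2%:R ^+ m
  + (rr n q)%:R / 2%:R ^+ m * (1 + (1 - 2 * f) ^+ (wstar n q).+1) ^+ m.

Definition vfun (R : realType) (n m q : nat) (f : R) : R :=
  q%:R / 2%:R ^+ m * (1 + eps_times n m q f - q%:R / 2%:R ^+ m).

Definition Ucond (R : realType) (n m : nat) (f : R) (z : nat) : bool :=
  3%:R / 4%:R <= 1 / (1 + 2%:R ^+ (2 * m) * vfun n m z f / (z%:R ^+ 2)).

(* U(n,m,f) = min{1 <= z <= 2^n | Ucond z}: first element of the increasing
   list of candidates; None encodes +infinity (empty set) *)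
Definition Ubound (R : realType) (n m : nat) (f : R) : option nat :=
  ohead [seq z <- iota 1 (2 ^ n) | Ucond n m f z].

(* Median of T bits equals 1 iff strictly more than half are 1
   (usual median, averaging the two middle values when T is even) *)
Definition median_is_one (T : nat) (b : 'I_T -> bool) : bool :=
  (T < 2 * #|[set t | b t]|)%N.

Definition estimator (R : realType) (n m T : nat) (f : R) (S : {set bvec n})
    (hs : {ffun 'I_T -> hashT m n}) : option nat :=
  if median_is_one (fun t => cell_count S (hs t) == 0%N) then Ubound n m f
  else Some (2 ^ n)%N.

Definition le_opt (k : nat) (a : option nat) : bool :=
  if a is Some u then (k <= u)%N else true.

Arguments prob_hashes {R} m n T f E.
Arguments estimator {R} n m T f S hs.
Arguments hash_weight {R} m n f h.
Arguments cell_count m n S h.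

(* Main.v *)
Require Import Defs.
From HB Require Import structures.
From mathcomp Require Import all_boot all_order all_algebra.
From mathcomp Require Import all_classical all_reals exp.
From mathcomp Require Import ring lra zify.
Import Order.TTheory GRing.Theory Num.Theory.
Local Open Scope ring_scope.
Set Implicit Arguments. Unset Strict Implicit. Unset Printing Implicit Defensive.
Definition sC (n w : nat) : nat := (\sum_(1 <= j < w.+1) 'C(n, j))%N.

Lemma sC_mono n a b : (a <= b)%N -> (sC n a <= sC n b)%N.
Proof.
move=> ab; rewrite /sC [X in (_ <= X)%N](big_cat_nat _ (n:=a.+1)) //=.
by rewrite leq_addr.
Qed.

Lemma sCS n w : sC n w.+1 = (sC n w + 'C(n, w.+1))%N.
Proof. by rewrite /sC big_nat_recr. Qed.

Lemma wstar_spec n q :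
  [/\ (wstar n q <= n)%N, (sC n (wstar n q) <= q.-1)%N &
      ((wstar n q < n)%N -> (q.-1 < sC n (wstar n q).+1)%N)].
Proof.
have P0 : (0 < #|[pred w : 'I_n.+1 | (sC n w <= q.-1)%N]|)%N.
  apply/card_gt0P; exists ord0; by rewrite inE /sC big_geq.
have [i0 Hi0 Hmax] := eq_bigmax_cond (fun w : 'I_n.+1 => (w : nat)) P0.
have -> : wstar n q = i0 by rewrite /wstar -Hmax.
split; first by rewrite -ltnS.
  by move: Hi0; rewrite inE.
move=> lt; rewrite ltnNge; apply/negP => H.
have := @leq_bigmax_cond _ (fun w : 'I_n.+1 => (sC n w <= q.-1)%N) (fun w : 'I_n.+1 => (w : nat)) (Ordinal (n:=n.+1) (m:=i0.+1) lt) H.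
rewrite -/(wstar n q) /=.
have -> : wstar n q = i0 by rewrite /wstar -Hmax.
by rewrite ltnn.
Qed.

Lemma sC_strict n a : (a < n)%N -> (sC n a < sC n a.+1)%N.
Proof. by move=> an; rewrite sCS -[X in (X < _)%N]addn0 ltn_add2l bin_gt0. Qed.

Lemma sC_mono_lt n a b : (b <= n)%N -> (a < b)%N -> (sC n a < sC n b)%N.
Proof.
move=> bn ab; apply: (leq_trans (@sC_strict n a (leq_trans ab bn))).
exact: sC_mono.
Qed.

Lemma wstar_char n q w : (w <= n)%N -> (sC n w <= q.-1)%N ->
  ((w < n)%N -> (q.-1 < sC n w.+1)%N) -> wstar n q = w.
Proof.
move=> wn Hw Hw1; have [w'n Hw' Hw'1] := wstar_spec n q.
apply/eqP; rewrite eqn_leq; apply/andP; split.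
  rewrite leqNgt; apply/negP => lt.
  have := Hw1 (leq_trans lt w'n); rewrite ltnNge => /negP; apply.
  by apply: leq_trans Hw'; apply: sC_mono.
rewrite leqNgt; apply/negP => lt.
have := Hw'1 (leq_trans lt wn); rewrite ltnNge => /negP; apply.
by apply: leq_trans Hw; apply: sC_mono.
Qed.

Section Eps.
Variable R : realType.
Implicit Types f : R.

Definition gg (m : nat) (f : R) (w : nat) : R := (1 + (1 - 2 * f) ^+ w) ^+ m / 2%:R ^+ m.

Definition EE n m f (w r : nat) : R :=
  \sum_(1 <= j < w.+1) 'C(n, j)%:R * gg m f j + r%:R * gg m f w.+1.

Lemma eps_EE n m q f : eps_times n m q f = EE n m f (wstar n q) (rr n q).
Proof.
rewrite /eps_times /EE /gg; congr (_ + _).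
  by apply: eq_bigr => j _; rewrite mulrA.
by rewrite mulrA mulrAC.
Qed.

Lemma EE_S n m f w r : EE n m f w r.+1 = EE n m f w r + gg m f w.+1.
Proof. by rewrite /EE mulrSr mulrDl mul1r addrA. Qed.

Lemma EE_next n m f w : EE n m f w.+1 0 = EE n m f w 'C(n, w.+1).
Proof. by rewrite /EE big_nat_recr //= mul0r addr0. Qed.

Lemma eps_diff n m q f : (1 <= q)%N ->
  eps_times n m q.+1 f = eps_times n m q f + gg m f (wstar n q).+1.
Proof.
move=> q1; rewrite !eps_EE -EE_S.
have [wn Hw Hw1] := wstar_spec n q.
set w := wstar n q in wn Hw Hw1 *.
have rrq : rr n q = (q.-1 - sC n w)%N by [].
have rrq1 : forall w', wstar n q.+1 = w' -> rr n q.+1 = (q - sC n w')%N.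
  by move=> w' <-.
have [wltn|] := ltnP w n; last first.
  move=> nw; have wE : w = n by apply/eqP; rewrite eqn_leq wn nw.
  have ws1 : wstar n q.+1 = w.
    apply: wstar_char => //=; first by apply: leq_trans Hw _; rewrite leq_pred.
    by rewrite wE ltnn.
  rewrite ws1 (rrq1 _ ws1) rrq; congr EE; lia.
have := Hw1 wltn => H1.
have [qlt|] := ltnP q (sC n w.+1).
  have ws1 : wstar n q.+1 = w.
    by apply: wstar_char => //=; apply: leq_trans Hw _; rewrite leq_pred.
  rewrite ws1 (rrq1 _ ws1) rrq; congr EE; lia.
move=> qge.
have qE : q = sC n w.+1 by lia.
have ws1 : wstar n q.+1 = w.+1.
  apply: wstar_char => //=; try lia.
  move=> lt; rewrite qE; exact: sC_strict.
rewrite ws1 (rrq1 _ ws1) rrq.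
have -> : (q - sC n w.+1)%N = 0%N by lia.
rewrite EE_next; congr EE.
have hs := sCS n w; have hb := bin_gt0 n w.+1; rewrite wltn in hb; lia.
Qed.
End Eps.

Section Mono.
Variable R : realType.
Variables (n m : nat).

Lemma c01 (f : R) (f0 : 0 <= f) (f12 : f <= 1 / 2) : 0 <= 1 - 2 * f <= 1.
Proof. apply/andP; split; lra. Qed.

Lemma gg_eq (f : R) (f0 : 0 <= f) (f12 : f <= 1 / 2) w : gg m f w = ((1 + (1 - 2 * f) ^+ w) / 2) ^+ m.
Proof. by rewrite /gg expr_div_n. Qed.

Lemma gg_ge0 (f : R) (f0 : 0 <= f) (f12 : f <= 1 / 2) w : 0 <= gg m f w.
Proof.
have /andP[c0 c1] := c01 f0 f12.
rewrite (gg_eq f0 f12) exprn_ge0 // divr_ge0 // addr_ge0 // exprn_ge0 //.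
Qed.

Lemma gg_le1 (f : R) (f0 : 0 <= f) (f12 : f <= 1 / 2) w : gg m f w <= 1.
Proof.
have /andP[c0 c1] := c01 f0 f12.
have h1 := exprn_ile1 w c0 c1; have h0 : 0 <= (1 - 2 * f) ^+ w by exact: exprn_ge0.
rewrite (gg_eq f0 f12) exprn_ile1 //; first by rewrite divr_ge0 // addr_ge0.
rewrite ler_pdivrMr //; lra.
Qed.

Lemma gg_anti (f : R) (f0 : 0 <= f) (f12 : f <= 1 / 2) j k : (j <= k)%N -> gg m f k <= gg m f j.
Proof.
have /andP[c0 c1] := c01 f0 f12.
move=> jk; rewrite !(gg_eq f0 f12); apply: lerXn2r.
- by rewrite qualifE /= divr_ge0 // addr_ge0 // exprn_ge0.
- by rewrite qualifE /= divr_ge0 // addr_ge0 // exprn_ge0.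
rewrite ler_pM2r ?invr_gt0 ?ltr0n // lerD2l; exact: ler_wiXn2l.
Qed.

Lemma EE_lb (f : R) (f0 : 0 <= f) (f12 : f <= 1 / 2) w r : (sC n w + r)%:R * gg m f w.+1 <= EE n m f w r.
Proof.
rewrite /EE natrD mulrDl lerD2r /sC natr_sum mulr_suml.
apply: ler_sum_nat => j /andP[_ jw]; apply: ler_wpM2l; first by [].
by apply: (gg_anti f0 f12); exact: ltnW.
Qed.

Lemma EE_ge0 (f : R) (f0 : 0 <= f) (f12 : f <= 1 / 2) w r : 0 <= EE n m f w r.
Proof.
apply: le_trans (EE_lb f0 f12 w r); apply: mulr_ge0; [exact: ler0n | idtac]. exact: (gg_ge0 f0 f12 w.+1). Qed.

Lemma eps_ge0 (f : R) (f0 : 0 <= f) (f12 : f <= 1 / 2) q : 0 <= eps_times n m q f.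
Proof. rewrite eps_EE; exact: (EE_ge0 f0 f12 _ _). Qed.

Lemma stepB (f : R) (f0 : 0 <= f) (f12 : f <= 1 / 2) q : (1 <= q)%N ->
  q%:R * (1 + eps_times n m q.+1 f) <= q.+1%:R * (1 + eps_times n m q f).
Proof.
move=> q1; rewrite eps_diff //.
have [wn Hw _] := wstar_spec n q.
have lb := EE_lb f0 f12 (wstar n q) (rr n q).
rewrite -eps_EE in lb.
have hsr : (sC n (wstar n q) + rr n q = q.-1)%N by rewrite /rr -/(sC n (wstar n q)); lia.
rewrite hsr in lb.
have g0 := gg_ge0 f0 f12 (wstar n q).+1; have g1 := gg_le1 f0 f12 (wstar n q).+1.
have qE : q%:R = (q.-1)%:R + 1 :> R by rewrite natr1 prednK.
rewrite -natr1 qE in lb *.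
set g := gg m f _ in lb g0 g1 *; set e := eps_times _ _ _ _ in lb *.
set a := (q.-1)%:R in lb qE *.
have a0 : 0 <= a by rewrite /a ler0n.
nra.
Qed.

Lemma monoB (f : R) (f0 : 0 <= f) (f12 : f <= 1 / 2) u k : (1 <= u)%N ->
  u%:R * (1 + eps_times n m (u + k) f) <= (u + k)%:R * (1 + eps_times n m u f).
Proof.
move=> u1; elim: k => [|k IH]; first by rewrite addn0.
have st := stepB f0 f12 (q := (u + k)) (leq_trans u1 (leq_addr _ _)).
rewrite addnS.
set A := 1 + eps_times n m (u + k).+1 f in st *.
set B := 1 + eps_times n m (u + k) f in st IH.
set C := 1 + eps_times n m u f in IH *.
have b1 : 1 <= (u + k)%:R :> R by rewrite ler1n; lia.
have a1 : 1 <= u%:R :> R by rewrite ler1n.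
rewrite -natr1 in st *.
set a := u%:R in IH a1 *; set b := (u + k)%:R in st IH b1 *.
have A0 : 0 <= A by rewrite /A; have := eps_ge0 f0 f12 (u + k).+1; lra.
have B0 : 0 <= B by rewrite /B; have := eps_ge0 f0 f12 (u + k); lra.
have C0 : 0 <= C by rewrite /C; have := eps_ge0 f0 f12 u; lra.
have h1 : a * (b * A) <= a * ((b + 1) * B) by apply: ler_wpM2l => //; lra.
have h2 : (b + 1) * (a * B) <= (b + 1) * (b * C) by apply: ler_wpM2l => //; lra.
suff : b * (a * A) <= b * ((b + 1) * C).
  by rewrite ler_pM2l //; lra.
nra.
Qed.
End Mono.

Section U.
Variable R : realType.
Variables (n m : nat).

Lemma Ucond_val (f : R) (f0 : 0 <= f) (f12 : f <= 1 / 2) z : (1 <= z)%N ->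
  1 / (1 + 2%:R ^+ (2 * m) * vfun n m z f / (z%:R ^+ 2)) =
  z%:R / (2%:R ^+ m * (1 + eps_times n m z f)).
Proof.
move=> z1; rewrite /vfun mulnC exprM.
have e0 := eps_ge0 n m f0 f12 z.
have K0 : 0 < 2%:R ^+ m :> R by rewrite exprn_gt0 // ltr0n.
have z0 : 0 < z%:R :> R by rewrite ltr0n.
set K := 2%:R ^+ m in K0 *; set e := eps_times n m z f in e0 *.
set x := z%:R in z0 *.
have -> : 1 + (K ^+ 2) * (x / K * (1 + e - x / K)) / (x ^+ 2) = K * (1 + e) / x.
  by field; apply/andP; split; rewrite gt_eqF.
rewrite -[RHS]invf_div; by rewrite div1r.
Qed.

Lemma Ucond_iff (f : R) (f0 : 0 <= f) (f12 : f <= 1 / 2) z : (1 <= z)%N ->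
  Ucond n m f z = (3%:R * 2%:R ^+ m * (1 + eps_times n m z f) <= 4%:R * z%:R).
Proof.
move=> z1; rewrite /Ucond Ucond_val //.
have e0 := eps_ge0 n m f0 f12 z.
have K0 : 0 < 2%:R ^+ m :> R by rewrite exprn_gt0 // ltr0n.
set K := 2%:R ^+ m in K0 *; set e := eps_times n m z f in e0 *.
have D0 : 0 < K * (1 + e) by apply: mulr_gt0 => //; lra.
rewrite ler_pdivlMr // mulrA.
set D := K * (1 + e) in D0 *.
rewrite -mulrA; apply/idP/idP => H; lra.
Qed.

Lemma Ucond_mono (f : R) (f0 : 0 <= f) (f12 : f <= 1 / 2) u q :
  (1 <= u)%N -> (u <= q)%N -> Ucond n m f u ->
  3%:R * 2%:R ^+ m * (1 + eps_times n m q f) <= 4%:R * q%:R.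
Proof.
move=> u1 uq; rewrite Ucond_iff // => H.
have := monoB n m f0 f12 (q - u) u1; rewrite subnKC //.
have e0 := eps_ge0 n m f0 f12 q; have e1 := eps_ge0 n m f0 f12 u.
have K0 : 0 < 2%:R ^+ m :> R by rewrite exprn_gt0 // ltr0n.
have a1 : 1 <= u%:R :> R by rewrite ler1n.
have b1 : u%:R <= q%:R :> R by rewrite ler_nat.
set K := 2%:R ^+ m in K0 H *; set A := 1 + eps_times n m q f in e0 *.
set B := 1 + eps_times n m u f in e1 H *.
set a := u%:R in a1 b1 H *; set b := q%:R in b1 *.
move=> M.
have h1 : a * (3%:R * K * A) <= 3%:R * K * (b * B) by rewrite mulrCA; apply: ler_wpM2l => //; lra.
have h2 : b * (3%:R * K * B) <= b * (4%:R * a) by apply: ler_wpM2l => //; lra.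
suff : a * (3%:R * K * A) <= a * (4%:R * b) by rewrite ler_pM2l //; lra.
nra.
Qed.
End U.

Section Hash.
Variable R : realType.
Variables (m n : nat).

Definition pa (f : R) (b : bool) : R := if b then f else 1 - f.
Definition PA (f : R) (A : 'M[bool]_(m, n)) : R := \prod_i \prod_j pa f (A i j).
Definition rowf (A : 'M[bool]_(m, n)) (i : 'I_m) : bvec n := [ffun j => A i j].
Definition par (r d : bvec n) : bool := \big[addb/false]_j (r j && d j).
Definition ax (A : 'M[bool]_(m, n)) (x : bvec n) : {ffun 'I_m -> bool} :=
  [ffun i => par (rowf A i) x].
Definition wt (d : bvec n) : nat := #|[set j | d j]|.
Definition xorv (x y : bvec n) : bvec n := [ffun j => x j (+) y j].

Lemma sumA_rows (F : 'I_m -> bvec n -> R) :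
  \sum_(A : 'M[bool]_(m, n)) \prod_i F i (rowf A i) = \prod_i \sum_(r : bvec n) F i r.
Proof.
rewrite bigA_distr_bigA /=.
pose h (g : {ffun 'I_m -> bvec n}) : 'M[bool]_(m, n) := \matrix_(i, j) g i j.
pose h' (A : 'M[bool]_(m, n)) : {ffun 'I_m -> bvec n} := [ffun i => rowf A i].
rewrite (reindex h); last first.
  exists h' => [g _ | A _].
    by apply/ffunP => i; rewrite ffunE; apply/ffunP => j; rewrite ffunE mxE.
  by apply/matrixP => i j; rewrite mxE ffunE ffunE.
apply: eq_bigr => g _; apply: eq_bigr => i _; congr F.
by apply/ffunP => j; rewrite ffunE mxE.
Qed.

Lemma sum_bvec_prod (G : 'I_n -> bool -> R) :
  \sum_(r : bvec n) \prod_j G j (r j) = \prod_j (G j true + G j false).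
Proof.
transitivity (\prod_j \sum_(b : bool) G j b); last by apply: eq_bigr => j _; rewrite big_bool.
by rewrite bigA_distr_bigA.
Qed.

Lemma par_ind (r d : bvec n) :
  ((par r d) == false)%:R = (1 + \prod_j (-1) ^+ (r j && d j)) / 2 :> R.
Proof.
have -> : \prod_j (-1) ^+ (r j && d j) = (-1) ^+ (par r d) :> R.
  have id1 : (-1) ^+ false = 1 :> R by [].
  by rewrite /par (big_morph (fun b : bool => (-1) ^+ b : R) (@signr_addb R) id1).
case: (par r d) => /=; rewrite ?expr1 ?expr0; by field.
Qed.

Lemma prod_if_card (c : R) (d : bvec n) :
  \prod_j (if d j then c else 1) = c ^+ wt d.
Proof.
by rewrite -big_mkcond /= prodr_const /wt cardsE.
Qed.

Lemma sum_pa (f : R) : \sum_(r : bvec n) \prod_j pa f (r j) = 1.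
Proof. rewrite (sum_bvec_prod (fun j b => pa f b)) /pa; apply: big1 => j _; ring. Qed.

Lemma row_par_sum (f : R) (d : bvec n) :
  \sum_(r : bvec n) (\prod_j pa f (r j)) * (par r d == false)%:R =
  (1 + (1 - 2 * f) ^+ wt d) / 2.
Proof.
under eq_bigr => r _ do rewrite par_ind mulrA mulrDr mulr1.
rewrite -mulr_suml big_split /=.
have e1 := sum_pa f.
have e2 : \sum_(r : bvec n) (\prod_j pa f (r j) * \prod_j (-1) ^+ (r j && d j)) = (1 - 2 * f) ^+ wt d.
  under eq_bigr => r _ do rewrite -big_split /=.
  rewrite (sum_bvec_prod (fun j b => pa f b * (-1) ^+ (b && d j))) -prod_if_card.
  apply: eq_bigr => j _; rewrite /pa; case: (d j) => /=; rewrite ?expr1 ?expr0; ring.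
by rewrite e1 e2.
Qed.

Lemma PA_rows (f : R) A : PA f A = \prod_i \prod_j pa f (rowf A i j).
Proof. by apply: eq_bigr => i _; apply: eq_bigr => j _; rewrite ffunE. Qed.

Lemma PA_sum (f : R) : \sum_A PA f A = 1.
Proof.
under eq_bigr => A _ do rewrite PA_rows.
rewrite (sumA_rows (fun i r => \prod_j pa f (r j))).
by apply: big1 => i _; rewrite sum_pa.
Qed.

Lemma ax0_ind A d :
  (ax A d == [ffun => false])%:R = \prod_i (par (rowf A i) d == false)%:R :> R.
Proof.
case: (boolP (ax A d == [ffun => false])) => H.
  rewrite /= big1 // => i _; move/eqP/ffunP: H => /(_ i); rewrite !ffunE => ->.
  by rewrite eqxx.
have [i Hi] : exists i, par (rowf A i) d != false.
  apply/existsP; rewrite -negb_forall; apply: contra H => /forallP Hi.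
  by apply/eqP/ffunP => i; rewrite !ffunE; exact/eqP/Hi.
by rewrite (bigD1 i) //= (negbTE Hi) mul0r.
Qed.

Lemma PA_ax_sum (f : R) d :
  \sum_A PA f A * (ax A d == [ffun => false])%:R = ((1 + (1 - 2 * f) ^+ wt d) / 2) ^+ m.
Proof.
under eq_bigr => A _ do rewrite PA_rows ax0_ind -big_split /=.
rewrite (sumA_rows (fun i r => \prod_j pa f (r j) * (par r d == false)%:R)).
under eq_bigr => i _ do rewrite row_par_sum.
by rewrite prodr_const card_ord.
Qed.

Lemma sum_pair (F : hashT m n -> R) :
  \sum_(h : hashT m n) F h = \sum_(A : 'M[bool]_(m, n)) \sum_(b : {ffun 'I_m -> bool}) F (A, b).
Proof. by rewrite pair_bigA; apply: eq_bigr => -[]. Qed.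

Lemma happ_eq (h : hashT m n) x : (hash_app h x == [ffun => false]) = (h.2 == ax h.1 x).
Proof.
apply/eqP/eqP => /ffunP H; apply/ffunP => i; have := H i; rewrite !ffunE /rowf /par.
  have -> : \big[addb/false]_j (h.1 i j && x j) = \big[addb/false]_j ([ffun j0 => h.1 i j0] j && x j).
    by apply: eq_bigr => j _; rewrite ffunE.
  by case: (h.2 i); case: (\big[addb/false]_j _).
move=> ->.
have -> : \big[addb/false]_j (h.1 i j && x j) = \big[addb/false]_j ([ffun j0 => h.1 i j0] j && x j).
  by apply: eq_bigr => j _; rewrite ffunE.
by case: (\big[addb/false]_j _).
Qed.

Lemma ax_xor A x y : (ax A (xorv x y) == [ffun => false]) = (ax A x == ax A y).
Proof.
have E : forall i, ax A (xorv x y) i = ax A x i (+) ax A y i.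
  move=> i; rewrite !ffunE /par -big_split /=; apply: eq_bigr => j _.
  by rewrite /xorv !ffunE; case: (A i j); case: (x j); case: (y j).
apply/eqP/eqP => /ffunP H; apply/ffunP => i; have := H i; rewrite E.
  by move: (ax A x i) (ax A y i) => a b; rewrite ffunE; case: a; case: b.
by move=> ->; move: (ax A y i) => a; rewrite ffunE; case: a.
Qed.

Lemma sum_eq1 (c : {ffun 'I_m -> bool}) : \sum_(b : {ffun 'I_m -> bool}) (b == c)%:R = 1 :> R.
Proof. by rewrite (bigD1 c) //= eqxx big1 ?addr0 // => b /negbTE ->. Qed.

Lemma Etot (f : R) : \sum_(h : hashT m n) hash_weight m n f h = 1.
Proof.
rewrite sum_pair /hash_weight /=.
under eq_bigr => A _ do rewrite sumr_const card_ffun card_bool card_ord.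
have K : forall x : R, x / 2%:R ^+ m *+ (2 ^ m)%N = x.
  by move=> x; rewrite -mulr_natr natrX mulfVK // expf_neq0 // pnatr_eq0.
under eq_bigr => A _ do rewrite K.
exact: PA_sum.
Qed.

Lemma hw_eq (f : R) (h : hashT m n) : hash_weight m n f h = PA f h.1 / 2%:R ^+ m.
Proof. by []. Qed.

Lemma natr_andb (a b : bool) : (a && b)%:R = a%:R * b%:R :> R.
Proof. by case: a; case: b; rewrite ?mul1r ?mul0r. Qed.

Lemma E1 (f : R) x :
  \sum_(h : hashT m n) hash_weight m n f h * (hash_app h x == [ffun => false])%:R = 1 / 2%:R ^+ m.
Proof.
rewrite sum_pair.
under eq_bigr => A _ do under eq_bigr => b _ do rewrite hw_eq happ_eq /=.
under eq_bigr => A _ do rewrite -mulr_sumr sum_eq1 mulr1.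
by rewrite -mulr_suml PA_sum.
Qed.

Lemma E2 (f : R) x y :
  \sum_(h : hashT m n) hash_weight m n f h *
     ((hash_app h x == [ffun => false]) && (hash_app h y == [ffun => false]))%:R =
  ((1 + (1 - 2 * f) ^+ wt (xorv x y)) / 2) ^+ m / 2%:R ^+ m.
Proof.
rewrite sum_pair.
have H : forall A b, (b == ax A x) && (b == ax A y) = (b == ax A x) && (ax A (xorv x y) == [ffun => false]).
  move=> A b; rewrite ax_xor; case: (eqVneq b (ax A x)) => [<-|] //=.
under eq_bigr => A _ do under eq_bigr => b _ do rewrite hw_eq !happ_eq /= H natr_andb mulrA.
under eq_bigr => A _ do rewrite -mulr_suml -mulr_sumr sum_eq1 mulr1 mulrAC.
by rewrite -mulr_suml PA_ax_sum.
Qed.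
End Hash.


Section Greedy.
Variable R : realType.

Lemma trunc_sum (F : nat -> R) W N : (W <= N)%N ->
  \sum_(1 <= w < N.+1) (if (w <= W)%N then F w else 0) = \sum_(1 <= w < W.+1) F w.
Proof.
move=> WN; rewrite (big_cat_nat _ (n := W.+1)) //=.
rewrite [X in _ + X]big1_seq ?addr0; last first.
  move=> w; rewrite /= mem_index_iota => /andP[Ww _]; case: leqP => // h; exfalso; lia.
apply: eq_big_nat => w /andP[_ wW]; by rewrite -ltnS wW.
Qed.

Lemma trunc_sumn (F : nat -> nat) W N : (W <= N)%N ->
  (\sum_(1 <= w < N.+1) (if (w <= W)%N then F w else 0) = \sum_(1 <= w < W.+1) F w)%N.
Proof.
move=> WN; rewrite (big_cat_nat _ (n := W.+1)) //=.
rewrite [X in (_ + X)%N]big1_seq ?addn0; last first.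
  move=> w; rewrite /= mem_index_iota => /andP[Ww _]; case: leqP => // h; exfalso; lia.
apply: eq_big_nat => w /andP[_ wW]; by rewrite -ltnS wW.
Qed.

Lemma greedy (G : nat -> R) (a c : nat -> nat) N W r :
  (forall j k, (j <= k)%N -> G k <= G j) ->
  (forall w, (a w <= c w)%N) -> (W <= N)%N ->
  (\sum_(1 <= w < N.+1) a w = \sum_(1 <= w < W.+1) c w + r)%N ->
  \sum_(1 <= w < N.+1) (a w)%:R * G w <=
  \sum_(1 <= w < W.+1) (c w)%:R * G w + r%:R * G W.+1.
Proof.
move=> Ganti ac WN Hsum.
pose cc w := if (w <= W)%N then c w else 0%N.
have pt : forall w, (a w)%:R * G w <= (cc w)%:R * G w + ((a w)%:R - (cc w)%:R) * G W.+1.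
  move=> w; rewrite /cc; case: (leqP w W) => wW.
    have h1 := Ganti _ _ (leq_trans wW (leqnSn W)).
    have h2 : (a w)%:R <= (c w)%:R :> R by rewrite ler_nat.
    nra.
  have h1 := Ganti _ _ wW.
  have h2 : 0 <= (a w)%:R :> R by [].
  rewrite mul0r add0r subr0; nra.
apply: le_trans (ler_sum_nat (fun w _ => pt w)) _.
rewrite big_split /= -mulr_suml sumrB.
have e1 : \sum_(1 <= w < N.+1) (cc w)%:R * G w = \sum_(1 <= w < W.+1) (c w)%:R * G w.
  rewrite -(trunc_sum (fun w => (c w)%:R * G w) WN); apply: eq_bigr => w _.
  by rewrite /cc; case: ifP => //; rewrite mul0r.
have e2 : (\sum_(1 <= w < N.+1) cc w = \sum_(1 <= w < W.+1) c w)%N.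
  by rewrite -(trunc_sumn c WN).
rewrite e1 -!natr_sum e2 Hsum natrD.
have -> : ((\sum_(1 <= w < W.+1) c w)%:R + r%:R - (\sum_(1 <= w < W.+1) c w)%:R) = r%:R :> R.
  by rewrite addrC addKr.
by [].
Qed.
End Greedy.


Section Single.
Variable R : realType.
Variables (m n : nat).
Variable S : {set bvec n}.

Lemma cardR (P : pred (bvec n)) :
  (#|[set y in S | P y]|)%:R = \sum_(y in S) (P y)%:R :> R.
Proof.
rewrite -sum1_card natr_sum.
rewrite (eq_bigl (fun y => (y \in S) && P y)); last by move=> y; rewrite inE.
by rewrite big_mkcondr /=; apply: eq_bigr => y _; case: (P y).
Qed.

Lemma cardR' (x : bvec n) (Q : pred (bvec n)) :
  (#|[set y in S | (y != x) && Q y]|)%:R = \sum_(y in S | y != x) (Q y)%:R :> R.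
Proof.
rewrite cardR big_mkcondr /=; apply: eq_bigr => y _.
by case: (y != x).
Qed.

Lemma xorv_inj (x : bvec n) : injective (xorv x).
Proof.
move=> y1 y2 /ffunP H; apply/ffunP => j; have := H j; rewrite !ffunE.
by case: (x j); case: (y1 j); case: (y2 j).
Qed.

Lemma bound_a (x : bvec n) w : (#|[set y in S | (y != x) && (wt (xorv x y) == w)]| <= 'C(n, w))%N.
Proof.
set D := [set y in S | _].
pose phi (y : bvec n) : {set 'I_n} := [set j | xorv x y j].
have phi_inj : injective phi.
  move=> y1 y2 /setP H; apply: (@xorv_inj x y1 y2); apply/ffunP => j.
  by have := H j; rewrite /phi !inE.
rewrite -(card_imset D phi_inj) -[X in (_ <= 'C(X, _))%N]card_ord -card_draws.
apply: subset_leq_card; apply/fintype.subsetP => A /imsetP[y yD ->].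
by rewrite inE; move: yD; rewrite inE => /andP[_ /andP[_ /eqP <-]].
Qed.

Lemma wt0 (d : bvec n) : wt d = 0%N -> d = [ffun => false].
Proof.
move=> /eqP; rewrite /wt cards_eq0 => /eqP H; apply/ffunP => j; rewrite ffunE.
apply/negbTE/negP => dj.
have : j \in [set j | d j] by rewrite inE.
by rewrite H inE.
Qed.

Lemma wt_le (d : bvec n) : (wt d <= n)%N.
Proof. by rewrite /wt -[X in (_ <= X)%N]card_ord max_card. Qed.

Lemma gg0 (f : R) : gg m f 0 = 1.
Proof. have e : (1 + 1 : R) = 2%:R by rewrite -(natrD R 1 1).
by rewrite /gg expr0 e divff // expf_neq0 // pnatr_eq0. Qed.

Lemma split_wt (F : nat -> R) (d : bvec n) :
  F (wt d) = \sum_(0 <= w < n.+1) (wt d == w)%:R * F w.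
Proof.
rewrite big_mkord (bigD1 (Ordinal (n:=n.+1) (m:=wt d) (wt_le d))) //= eqxx mul1r.
rewrite big1 ?addr0 // => i ne; case: eqP => [E|]; last by rewrite mul0r.
have Ei : i = Ordinal (n:=n.+1) (m:=wt d) (wt_le d) by apply/val_inj; rewrite /= E.
by move: ne; rewrite Ei eqxx.
Qed.

Lemma wt_xx (x : bvec n) : wt (xorv x x) = 0%N.
Proof.
rewrite /wt; apply/eqP; rewrite cards_eq0; apply/eqP/setP => j.
by rewrite !inE ffunE addbb.
Qed.

Lemma claimA (f : R) (f0 : 0 <= f) (f12 : f <= 1 / 2) (x : bvec n) : x \in S ->
  \sum_(y in S) gg m f (wt (xorv x y)) <= 1 + eps_times n m #|S| f.
Proof.
move=> xS; rewrite (bigD1 x xS) /= wt_xx gg0 lerD2l.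
set a := fun w => #|[set y in S | (y != x) && (wt (xorv x y) == w)]|.
have Ha : forall F : nat -> R, \sum_(y in S | y != x) F (wt (xorv x y)) =
    \sum_(0 <= w < n.+1) (a w)%:R * F w.
  move=> F; under eq_bigr => y _ do rewrite (split_wt F).
  rewrite exchange_big /=; apply: eq_bigr => w _; rewrite /a cardR' mulr_suml.
  by [].
have a0 : a 0%N = 0%N.
  have : (a 0%N)%:R = 0 :> R.
    rewrite /a cardR' big1 // => y yx; case: eqP => // /wt0 H.
    have : xorv x y = xorv x x by rewrite H; apply/ffunP => j; rewrite !ffunE addbb.
    by move=> /(@xorv_inj x y x) E; move: yx; rewrite E eqxx andbF.
  by move/eqP; rewrite pnatr_eq0 => /eqP.
have [wn Hw _] := wstar_spec n #|S|.
have Hsum : (\sum_(1 <= w < n.+1) a w = sC n (wstar n #|S|) + rr n #|S|)%N.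
  have H1 : \sum_(y in S | y != x) (1:R) = \sum_(0 <= w < n.+1) (a w)%:R.
    by rewrite (Ha (fun _ => 1)); apply: eq_bigr => w _; rewrite mulr1.
  rewrite -natr_sum in H1.
  have H2 : \sum_(y in S) (1 : R) = 1 + \sum_(y in S | y != x) 1 by rewrite (bigD1 x xS).
  rewrite sumr_const H1 in H2.
  have {}H2 : (#|S| = 1 + \sum_(0 <= i < n.+1) a i)%N.
    by apply/eqP; rewrite -(eqr_nat R) natrD mulr1n; apply/eqP.
  rewrite big_ltn // a0 add0n in H2.
  rewrite /rr -/(sC n (wstar n #|S|)); lia.
rewrite Ha big_ltn // a0 mul0r add0r eps_EE.
apply: (greedy (G := gg m f) (c := fun w => 'C(n, w))) => //.
- by move=> j k jk; exact: (gg_anti m f0 f12 jk).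
- by move=> w; exact: bound_a.
Qed.
End Single.


Section Single2.
Variable R : realType.
Variables (m n : nat).
Variable S : {set bvec n}.

Lemma pa_ge0 (f : R) (f0 : 0 <= f) (f12 : f <= 1 / 2) b : 0 <= pa f b.
Proof. rewrite /pa; case: b => //; lra. Qed.

Lemma hw_ge0 (f : R) (f0 : 0 <= f) (f12 : f <= 1 / 2) (h : hashT m n) :
  0 <= hash_weight m n f h.
Proof.
rewrite hw_eq divr_ge0 ?exprn_ge0 // /PA.
apply: prodr_ge0 => i _; apply: prodr_ge0 => j _; exact: pa_ge0.
Qed.

Lemma X_eq (h : hashT m n) :
  (cell_count S h)%:R = \sum_(x in S) (hash_app h x == [ffun => false])%:R :> R.
Proof. by rewrite /cell_count cardR. Qed.

Lemma M1 (f : R) :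
  \sum_(h : hashT m n) hash_weight m n f h * (cell_count S h)%:R = #|S|%:R / 2%:R ^+ m.
Proof.
under eq_bigr => h _ do rewrite X_eq mulr_sumr.
rewrite exchange_big /=.
under eq_bigr => x _ do rewrite E1.
by rewrite sumr_const div1r mulr_natl.
Qed.

Lemma M2 (f : R) (f0 : 0 <= f) (f12 : f <= 1 / 2) :
  \sum_(h : hashT m n) hash_weight m n f h * (cell_count S h)%:R ^+ 2 <=
  #|S|%:R * (1 + eps_times n m #|S| f) / 2%:R ^+ m.
Proof.
under eq_bigr => h _ do rewrite expr2 X_eq mulr_suml.
under eq_bigr => h _ do under eq_bigr => x _ do rewrite mulr_sumr.
under eq_bigr => h _ do rewrite mulr_sumr.
under eq_bigr => h _ do under eq_bigr => x _ do rewrite mulr_sumr.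
rewrite exchange_big /=.
under eq_bigr => x _ do rewrite exchange_big /=.
under eq_bigr => x _ do under eq_bigr => y _ do
  (under eq_bigr => h _ do rewrite -natr_andb; rewrite E2 -(gg_eq m f0 f12)).
under eq_bigr => x _ do rewrite -mulr_suml.
rewrite -mulr_suml ler_wpM2r ?invr_ge0 ?exprn_ge0 //.
rewrite mulr_natl -sumr_const.
apply: ler_sum => x xS; exact: claimA.
Qed.

Lemma p0_bound (f : R) (f0 : 0 <= f) (f12 : f <= 1 / 2) :
  (1 <= #|S|)%N ->
  3%:R * 2%:R ^+ m * (1 + eps_times n m #|S| f) <= 4%:R * #|S|%:R ->
  \sum_(h : hashT m n) hash_weight m n f h * (cell_count S h == 0%N)%:R <= 1 / 4%:R.
Proof.
move=> q1 Hq.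
have e0 := eps_ge0 n m f0 f12 #|S|.
have K0 : 0 < 2%:R ^+ m :> R by rewrite exprn_gt0 // ltr0n.
have hM2 := M2 f0 f12; have hM1 := M1 f.
set K := 2%:R ^+ m in K0 Hq hM2 hM1 *.
set e := 1 + eps_times n m #|S| f in Hq hM2 *.
have e1 : 1 <= e by rewrite /e; lra.
set a := e^-1.
have ae : a * e = 1 by rewrite /a mulVf // gt_eqF //; lra.
have a0 : 0 <= a by rewrite /a invr_ge0; lra.
have pt : forall h : hashT m n, hash_weight m n f h * (cell_count S h == 0%N)%:R <=
    hash_weight m n f h + (- (2%:R * a)) * (hash_weight m n f h * (cell_count S h)%:R)
    + a ^+ 2 * (hash_weight m n f h * (cell_count S h)%:R ^+ 2).
  move=> h; have w0 := hw_ge0 f0 f12 h.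
  have -> : hash_weight m n f h + (- (2%:R * a)) * (hash_weight m n f h * (cell_count S h)%:R)
    + a ^+ 2 * (hash_weight m n f h * (cell_count S h)%:R ^+ 2) =
    hash_weight m n f h * (1 - a * (cell_count S h)%:R) ^+ 2 by ring.
  apply: ler_wpM2l => //.
  case: eqP => [->|_]; first by rewrite mulr0 subr0 expr1n.
  exact: sqr_ge0.
apply: le_trans (ler_sum _ (fun h _ => pt h)) _.
rewrite !big_split /= -!mulr_sumr Etot hM1.
have q0 : 0 < #|S|%:R :> R by rewrite ltr0n.
set q := #|S|%:R in Hq hM2 hM1 q0 *.
have Ht : 3%:R / 4%:R <= a * (q / K).
  have -> : a * (q / K) = q / (K * e) by rewrite /a; field; apply/andP; split; rewrite gt_eqF //; lra.
  rewrite ler_pdivlMr ?mulr_gt0 //; last by lra.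
  move: Hq; rewrite -mulrA; set D := K * e => Hq; lra.
have Ha2 : a ^+ 2 * (\sum_h hash_weight m n f h * (cell_count S h)%:R ^+ 2) <= a * (q / K).
  apply: le_trans (ler_wpM2l (exprn_ge0 2 a0) hM2) _.
  have -> : a ^+ 2 * (q * e / K) = (a * e) * (a * (q / K)) by rewrite /K; field; rewrite gt_eqF //.
  by rewrite ae mul1r.
set t := a * (q / K) in Ht Ha2 *.
have -> : - (2%:R * a) * (q / K) = - (2%:R * t) by rewrite /t mulrA mulNr.
lra.
Qed.
End Single2.


Section Final.
Variable R : realType.

Lemma seven_eighths (T : nat) (Delta : R) : 0 < Delta ->
  24%:R * ln (1 / Delta) <= T%:R -> (7%:R / 8%:R) ^+ T <= Delta.
Proof.
move=> D0 HT.
have h1 : 7%:R / 8%:R <= sequences.expR (- (1 / 24%:R)) :> R.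
  apply: le_trans (expR_ge1Dx _); lra.
have h0 : 0 <= 7%:R / 8%:R :> R by lra.
apply: le_trans (lerXn2r T _ _ h1) _; rewrite ?qualifE /= ?expR_ge0 //.
rewrite -expRM_natl.
have Dpos : Delta \in Num.pos by rewrite qualifE.
have lnE : ln (1 / Delta) = - ln Delta by rewrite div1r lnV.
rewrite -[X in _ <= X](lnK Dpos) ler_expR.
rewrite lnE in HT; lra.
Qed.
End Final.

Section Final2.
Variable R : realType.
Variables (m n : nat).
Variable S : {set bvec n}.

Lemma prob_total (f : R) (T : nat) :
  \sum_(hs : {ffun 'I_T -> hashT m n}) \prod_t hash_weight m n f (hs t) = 1.
Proof.
transitivity (\prod_(t < T) \sum_(h : hashT m n) hash_weight m n f h).
  by rewrite bigA_distr_bigA.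
by apply: big1 => t _; rewrite Etot.
Qed.

Lemma median_bound (f : R) (f0 : 0 <= f) (f12 : f <= 1 / 2) (T : nat) :
  \sum_(h : hashT m n) hash_weight m n f h * (cell_count S h == 0%N)%:R <= 1 / 4%:R ->
  \sum_(hs : {ffun 'I_T -> hashT m n} | median_is_one (fun t => cell_count S (hs t) == 0%N))
     \prod_t hash_weight m n f (hs t) <= (7%:R / 8%:R) ^+ T.
Proof.
move=> Hp.
pose c (h : hashT m n) : R := if cell_count S h == 0%N then 4%:R else 1.
have c0 : forall h, 0 <= c h by move=> h; rewrite /c; case: ifP.
have K0 : 0 < 2%:R ^+ T :> R by rewrite exprn_gt0 // ltr0n.
have step : \sum_(hs : {ffun 'I_T -> hashT m n} | median_is_one (fun t => cell_count S (hs t) == 0%N))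
     \prod_t hash_weight m n f (hs t) <=
   \sum_(hs : {ffun 'I_T -> hashT m n}) \prod_t (hash_weight m n f (hs t) * c (hs t)) / 2%:R ^+ T.
  rewrite [X in X <= _]big_mkcond /=; apply: ler_sum => hs _.
  have P0 : 0 <= \prod_t hash_weight m n f (hs t).
    by apply: prodr_ge0 => t _; exact: hw_ge0.
  case: ifP => Hm; last first.
    by apply: divr_ge0; [apply: prodr_ge0 => t _; apply: mulr_ge0; [exact: hw_ge0|exact: c0]|exact: ltW].
  have E : \prod_t (hash_weight m n f (hs t) * c (hs t)) = (\prod_t hash_weight m n f (hs t)) * \prod_t c (hs t) by rewrite big_split.
  rewrite E -mulrA -[X in X <= _]mulr1; apply: ler_wpM2l => //.
  rewrite ler_pdivlMr // mul1r.
  have -> : \prod_t c (hs t) = 4%:R ^+ #|[pred t | cell_count S (hs t) == 0%N]|.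
    by rewrite /c -big_mkcond /= prodr_const.
  have -> : 4%:R = 2%:R ^+ 2 :> R by rewrite -natrX.
  rewrite -exprM; apply: ler_weXn2l; first by rewrite ler1n.
  move: Hm; rewrite /median_is_one cardsE => Hm; exact: ltnW.
apply: le_trans step _.
rewrite -mulr_suml.
have -> : \sum_(hs : {ffun 'I_T -> hashT m n}) \prod_t (hash_weight m n f (hs t) * c (hs t)) =
    \prod_(t < T) \sum_(h : hashT m n) hash_weight m n f h * c h.
  by rewrite bigA_distr_bigA.
rewrite prodr_const card_ord -expr_div_n.
have Hc : \sum_(h : hashT m n) hash_weight m n f h * c h <= 7%:R / 4%:R.
  have -> : \sum_(h : hashT m n) hash_weight m n f h * c h =
      \sum_(h : hashT m n) hash_weight m n f h +
      3%:R * \sum_(h : hashT m n) hash_weight m n f h * (cell_count S h == 0%N)%:R.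
    rewrite mulr_sumr -big_split /=; apply: eq_bigr => h _; rewrite /c.
    by case: eqP => _; rewrite ?mulr1 ?mulr0 ?addr0 //; ring.
  rewrite Etot; lra.
have Hc0 : 0 <= \sum_(h : hashT m n) hash_weight m n f h * c h.
  by apply: sumr_ge0 => h _; apply: mulr_ge0; [exact: hw_ge0|exact: c0].
have -> : 7%:R / 8%:R = (7%:R / 4%:R) / 2%:R :> R by field.
apply: lerXn2r; rewrite ?qualifE /=.
- by apply: divr_ge0.
- lra.
by rewrite ler_pM2r // invr_gt0 ltr0n.
Qed.
End Final2.


Lemma card_S_le (n : nat) (S : {set bvec n}) : (#|S| <= 2 ^ n)%N.
Proof.
apply: leq_trans (max_card _) _.
by rewrite card_ffun card_bool card_ord.
Qed.

Unset Implicit Arguments.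
Theorem theorem4 (R : realType) (n m T : nat) (f Delta : R)
    (S : {set bvec n}) :
  (1 <= m)%N -> (m <= n)%N ->
  0 <= f -> f <= 1 / 2 ->
  0 < Delta -> Delta < 1 ->
  24%:R * ln (1 / Delta) <= T%:R ->
  1 - Delta <= prob_hashes m n T f
                 (fun hs => le_opt #|S| (estimator n m T f S hs)).
Proof.
move=> m1 mn f0 f12 D0 D1 HT.
have tot := prob_total m n f T.
have Sb := card_S_le S.
rewrite /prob_hashes.
have allT : (forall hs, le_opt #|S| (estimator n m T f S hs)) ->
    1 - Delta <= \sum_(hs | le_opt #|S| (estimator n m T f S hs)) \prod_t hash_weight m n f (hs t).
  move=> H; rewrite (eq_bigl (fun _ => true)); last by move=> hs; rewrite H.
  rewrite tot; lra.
case HU: (Ubound n m f) => [u|]; last first.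
  apply: allT => hs; rewrite /estimator HU; by case: ifP.
have [Su|uS] := leqP #|S| u.
  apply: allT => hs; rewrite /estimator HU; by case: ifP.
have : u \in [seq z <- iota 1 (2 ^ n) | Ucond n m f z].
  move: HU; rewrite /Ubound; case: [seq z <- iota 1 (2 ^ n) | Ucond n m f z] => //= a s.
  by case=> ->; rewrite mem_head.
rewrite mem_filter mem_iota => /andP[Uu /andP[u1 _]].
have Hq := Ucond_mono f0 f12 u1 (ltnW uS) Uu.
have q1 : (1 <= #|S|)%N by apply: leq_trans u1 (ltnW uS).
have Hp := p0_bound (m:=m) (S:=S) f0 f12 q1 Hq.
have Hmed := @median_bound R m n S f f0 f12 T Hp.
have H78 := seven_eighths D0 HT.
have := tot; rewrite (bigID (fun hs => le_opt #|S| (estimator n m T f S hs))) /= => tot2.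
suff : \sum_(hs | ~~ le_opt #|S| (estimator n m T f S hs)) \prod_t hash_weight m n f (hs t) <= Delta.
  move=> H; move: H tot2; set A := \sum_(hs | le_opt _ _) _; set B := \sum_(hs | ~~ le_opt _ _) _.
  move=> H tot2; lra.
apply: le_trans H78; apply: le_trans Hmed.
have Hle : forall hs, ~~ le_opt #|S| (estimator n m T f S hs) ->
    median_is_one (fun t => cell_count S (hs t) == 0%N).
  by move=> hs; rewrite /estimator; case: ifP => // _; rewrite /= Sb.
rewrite [X in X <= _]big_mkcond [X in _ <= X]big_mkcond /=; apply: ler_sum => hs _.
case: ifP => Hn; first by rewrite (Hle hs Hn).
case: ifP => _ //; apply: prodr_ge0 => t _; exact: hw_ge0.
Qed.
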